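(* For every $n\ge 2$, $b^*_{1,n-1}\le c_n-\frac{c_n(1-2c_n)}{n}$.
   Context: A graph on $N$ vertices is even-degenerate if there is an ordering $v_1,\dots,v_N$ of its vertices such that for each $1\le i\le N-2$, $v_i$ has an even number of neighbours in $\{v_{i+1},\dots,v_N\}$. $c_n$ is the probability that $G(n,1/2)$ is not even-degenerate. Given fixed vertex sets $V,V'$ with $|V|=|V'|=m+s$ and $S\subseteq V\cap V'$ with $|S|=s$, a pair of random graphs $(G,G')$ is parity-linked on $S$ if it is distributed as a pair of independent $G\sim G(V,1/2)$, $G'\sim G(V',1/2)$ conditioned on the events $G[S]=G'[S]$ and $e(G)\equiv e(G')\pmod 2$. Then $b^*_{m,s}$ denotes the probability that both $G$ and $G'$ are not even-degenerate (this depends only on $m$ and $s$). *)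

(* Defs.v *)
From mathcomp Require Import all_boot all_order all_algebra.
From mathcomp Require Import fingroup perm.
Set Implicit Arguments. Unset Strict Implicit. Unset Printing Implicit Defensive.
Import Order.TTheory GRing.Theory Num.Theory.
Local Open Scope ring_scope.

(* A simple graph on the labelled vertex set 'I_n is its edge set:
   a set of 2-element subsets of 'I_n. *)
Definition vpairs (n : nat) : {set {set 'I_n}} := [set e : {set 'I_n} | #|e| == 2%N].

(* All graphs on 'I_n ; G(n,1/2) is the uniform distribution on this set. *)
Definition graphs (n : nat) : {set {set {set 'I_n}}} := powerset (vpairs n).

Definition nedges n (E : {set {set 'I_n}}) : nat := #|E|.

Definition induced n (S : {set 'I_n}) (E : {set {set 'I_n}}) : {set {set 'I_n}} :=
  [set e in E | e \subset S].

(* even-degenerate: there is an ordering v_0,...,v_{n-1} (v_k = p k) such that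
   for every position i with i+2 < n (i.e. 1 <= i+1 <= n-2 in 1-based indexing),
   v_i has an even number of neighbours among v_{i+1},...,v_{n-1}. *)
Definition even_degenerate n (E : {set {set 'I_n}}) : bool :=
  [exists p : {perm 'I_n},
    [forall i : 'I_n, (i.+2 < n)%N ==>
       ~~ odd #|[set j : 'I_n | (i < j)%N && ([set p i; p j] \in E)]| ]].

Definition c_ (n : nat) : rat :=
  #|[set E in graphs n | ~~ even_degenerate E]|%:R / #|graphs n|%:R.

Definition plinked N (S : {set 'I_N}) (P : {set {set 'I_N}} * {set {set 'I_N}}) : bool :=
  [&& P.1 \in graphs N, P.2 \in graphs N,
      induced S P.1 == induced S P.2 & odd (nedges P.1) == odd (nedges P.2)].

Definition bstar N (S : {set 'I_N}) : rat :=
  #|[set P | plinked S P && ~~ even_degenerate P.1 && ~~ even_degenerate P.2]|%:R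
  / #|[set P | plinked S P]|%:R.

(* Main.v *)
Require Import Defs.
From mathcomp Require Import all_boot all_order all_algebra.
From mathcomp Require Import fingroup perm zify.
From mathcomp Require Import ring lra.
Set Implicit Arguments. Unset Strict Implicit. Unset Printing Implicit Defensive.
Import Order.TTheory GRing.Theory Num.Theory.
Local Open Scope ring_scope.

Section Fourier.
Variable T : finType.
Implicit Types A B C S G H K X : {set T}.

Definition chi S G : rat := (-1) ^+ #|S :&: G|.
Definition sd A B := (A :\: B) :|: (B :\: A).

Lemma in_sd x A B : (x \in sd A B) = (x \in A) (+) (x \in B).
Proof. by rewrite !inE; case: (x \in A); case: (x \in B). Qed.

Lemma odd_card_sd A B : odd #|sd A B| = odd #|A| (+) odd #|B|.
Proof.
have -> : #|sd A B| = (#|A :\: B| + #|B :\: A|)%N.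
  rewrite -cardsUI.
  have -> : (A :\: B) :&: (B :\: A) = set0.
    by apply/setP => x; rewrite !inE; case: (x \in A); case: (x \in B).
  by rewrite cards0 addn0.
rewrite -(cardsID B A) -(cardsID A B) setIC !oddD.
by case: (odd _); case: (odd _); case: (odd _).
Qed.

Lemma setI_sd S A B : S :&: sd A B = sd (S :&: A) (S :&: B).
Proof.
apply/setP => x; rewrite inE !in_sd !inE.
by case: (x \in S); case: (x \in A); case: (x \in B).
Qed.

Lemma chi_sd S A B : chi S (sd A B) = chi S A * chi S B.
Proof. by rewrite /chi -signr_odd setI_sd odd_card_sd signr_addb !signr_odd. Qed.

Lemma chiC S G : chi S G = chi G S.
Proof. by rewrite /chi setIC. Qed.

Lemma sdK B : cancel (sd^~ B) (sd^~ B).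
Proof.
move=> A; apply/setP => x; rewrite !in_sd.
by case: (x \in A); case: (x \in B).
Qed.

Lemma sdC A B : sd A B = sd B A.
Proof. by apply/setP => x; rewrite !in_sd addbC. Qed.

Lemma sd0 A : sd A set0 = A.
Proof. by apply/setP => x; rewrite in_sd inE addbF. Qed.

Lemma sd_eq0 A B : (sd A B == set0) = (A == B).
Proof.
apply/eqP/eqP => [h|->].
  apply/setP => x; move/setP: h => /(_ x); rewrite in_sd inE.
  by case: (x \in A); case: (x \in B).
by apply/setP => x; rewrite in_sd inE addbb.
Qed.

Lemma sd_sub A B X : A \subset X -> B \subset X -> sd A B \subset X.
Proof.
move=> /subsetP hA /subsetP hB; apply/subsetP => x; rewrite in_sd.
by case hx: (x \in A) => /=; [move=> _; apply: hA | apply: hB].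
Qed.

Lemma sum_chi X S : \sum_(B in powerset X) chi S B =
  if S :&: X == set0 then (2 ^ #|X|)%:R else 0.
Proof.
case: ifP => h.
  rewrite (eq_bigr (fun _ => 1)); first by rewrite sumr_const card_powerset.
  move=> B; rewrite powersetE => sB.
  have : S :&: B \subset S :&: X by apply: setIS.
  by rewrite (eqP h) subset0 /chi => /eqP ->; rewrite cards0 expr0.
move/set0Pn: (negbT h) => [e he].
move: he; rewrite inE => /andP [eS eX].
set s := (X in X = _).
have hs : s = - s.
  rewrite {1}/s (reindex_inj (can_inj (sdK [set e]))) /=.
  rewrite (eq_bigl (fun B => B \in powerset X)); last first.
    move=> B; rewrite !powersetE; apply/idP/idP => hB.
      by rewrite -(sdK [set e] B); apply: sd_sub => //; rewrite sub1set.
    by apply: sd_sub => //; rewrite sub1set.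
  rewrite /s -sumrN; apply: eq_bigr => B _.
  rewrite chi_sd /chi.
  have -> : S :&: [set e] = [set e] by apply/setIidPr; rewrite sub1set.
  by rewrite cards1 expr1 mulrN1.
have : 2 * s = 0 by rewrite mulr2n mulrDl mul1r {2}hs subrr.
by move/eqP; rewrite mulf_eq0 pnatr_eq0 /= => /eqP.
Qed.

Variable E : {set T}.
Let m := #|E|.
Let M : rat := (2 ^ m)%:R.

Lemma M_neq0 : M != 0.
Proof. by rewrite /M pnatr_eq0 expn_eq0. Qed.

Definition fhat (f : {set T} -> rat) S := \sum_(H in powerset E) f H * chi S H.

Lemma inversion f K : K \subset E ->
  \sum_(S in powerset E) fhat f S * chi S K = M * f K.
Proof.
move=> KE.
rewrite /fhat.
under eq_bigr do rewrite mulr_suml.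
rewrite exchange_big /=.
have inner H : \sum_(S in powerset E) f H * chi S H * chi S K =
    f H * (if sd H K :&: E == set0 then M else 0).
  rewrite -sum_chi mulr_sumr; apply: eq_bigr => S _.
  by rewrite -mulrA (chiC (sd H K)) chi_sd.
under eq_bigr do rewrite inner.
rewrite (bigD1 K) /=; last by rewrite powersetE.
have -> : sd K K = set0 by apply/eqP; rewrite sd_eq0.
rewrite set0I eqxx.
rewrite [X in _ + X]big1 ?addr0; first by rewrite mulrC.
move=> H /andP [HE HK].
have -> : sd H K :&: E = sd H K.
  by apply/setIidPl; apply: sd_sub => //; rewrite -powersetE.
by rewrite sd_eq0 (negbTE HK) mulr0.
Qed.

Lemma autocorr f B : B \subset E ->
  \sum_(G in powerset E) f G * f (sd G B) =
  M^-1 * \sum_(S in powerset E) fhat f S ^+ 2 * chi S B.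
Proof.
move=> BE.
have fi K : K \subset E -> f K = M^-1 * \sum_(S in powerset E) fhat f S * chi S K.
  by move=> KE; rewrite inversion // mulKf // M_neq0.
transitivity (\sum_(G in powerset E) f G *
   (M^-1 * \sum_(S in powerset E) fhat f S * chi S (sd G B))).
  apply: eq_bigr => G; rewrite powersetE => GE.
  by rewrite -fi //; apply: sd_sub.
under eq_bigr do rewrite mulrCA.
rewrite -mulr_sumr; congr (_ * _).
under eq_bigr do rewrite mulr_sumr.
rewrite exchange_big /=; apply: eq_bigr => S _.
transitivity (fhat f S * chi S B * \sum_(G in powerset E) f G * chi S G).
  rewrite mulr_sumr; apply: eq_bigr => G _; rewrite chi_sd; ring.
rewrite -/(fhat f S); ring.
Qed.

Lemma sum_chi_even X S : \sum_(B in powerset X | ~~ odd #|B|) chi S B =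
  (2 ^ #|X|)%:R / 2 * ((S :&: X == set0)%:R + (X \subset S)%:R).
Proof.
rewrite big_mkcondr /=.
transitivity (\sum_(B in powerset X) (chi S B + chi (sd S X) B) / 2).
  apply: eq_bigr => B; rewrite powersetE => BX.
  have cX : chi X B = (-1) ^+ #|B| by rewrite /chi (setIidPr BX).
  rewrite (chiC (sd S X)) chi_sd !(chiC B) cX -signr_odd.
  by case: (odd #|B|) => /=; field.
rewrite -mulr_suml big_split /= !sum_chi.
have -> : sd S X :&: X = X :\: S.
  by apply/setP => x; rewrite in_setI in_sd in_setD; case: (x \in S); case: (x \in X).
rewrite setD_eq0.
by case: (_ == _); case: (X \subset S) => /=; field.
Qed.

Lemma Qformula f X : X \subset E ->
  \sum_(G in powerset E) \sum_(B in powerset X | ~~ odd #|B|) f G * f (sd G B) =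
  M^-1 * \sum_(S in powerset E) fhat f S ^+ 2 *
    ((2 ^ #|X|)%:R / 2 * ((S :&: X == set0)%:R + (X \subset S)%:R)).
Proof.
move=> XE.
rewrite exchange_big /=.
transitivity (\sum_(B in powerset X | ~~ odd #|B|)
   M^-1 * \sum_(S in powerset E) fhat f S ^+ 2 * chi S B).
  apply: eq_bigr => B /andP [hB _]; apply: autocorr.
  by rewrite powersetE in hB; apply: subset_trans hB XE.
rewrite -mulr_sumr exchange_big /=; congr (_ * _); apply: eq_bigr => S _.
by rewrite -mulr_sumr sum_chi_even.
Qed.

Lemma parseval f : \sum_(G in powerset E) f G ^+ 2 =
  M^-1 * \sum_(S in powerset E) fhat f S ^+ 2.
Proof.
transitivity (M^-1 * \sum_(S in powerset E) fhat f S ^+ 2 * chi S set0).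
  rewrite -(autocorr f (sub0set E)).
  by apply: eq_bigr => G _; rewrite sd0 expr2.
congr (_ * _); apply: eq_bigr => S _.
by rewrite /chi setI0 cards0 expr0 mulr1.
Qed.

End Fourier.

Section Graphs.
Variable n : nat.
Local Notation Ty := {set {set 'I_n}}.

Definition fb (G : Ty) : rat := (~~ even_degenerate G)%:R.
Definition star (v : 'I_n) : Ty := [set e in vpairs n | v \in e].

Lemma star_sub v : star v \subset vpairs n.
Proof. by apply/subsetP => e; rewrite inE => /andP []. Qed.

Definition Qs (f : Ty -> rat) v :=
  \sum_(G in graphs n) \sum_(B in powerset (star v) | ~~ odd #|B|) f G * f (sd G B).

Lemma sub_S_iff (S : {set 'I_n}) v (hS : forall u, (u \in S) = (u != v))
  (e : {set 'I_n}) : (e \subset S) = (v \notin e).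
Proof.
apply/subsetP/idP => [h | h u ue].
  by apply/negP => /h; rewrite hS eqxx.
by rewrite hS; apply/eqP => uv; move: h; rewrite -uv ue.
Qed.

Lemma mem_induced (S : {set 'I_n}) (G : Ty) e :
  (e \in induced S G) = (e \in G) && (e \subset S).
Proof. by rewrite /induced in_set. Qed.

Lemma sdinv (G : Ty) : cancel (sd G) (sd G).
Proof. by move=> B; rewrite (sdC G B) sdC sdK. Qed.

Lemma plinked_sd (S : {set 'I_n}) v (hS : forall u, (u \in S) = (u != v)) G B :
  G \in graphs n -> plinked S (G, sd G B) = (B \subset star v) && ~~ odd #|B|.
Proof.
move=> hG; rewrite /plinked /= hG /nedges odd_card_sd /=.
have -> : (odd #|G| == odd #|G| (+) odd #|B|) = ~~ odd #|B|.
  by case: (odd #|G|); case: (odd #|B|).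
rewrite andbA; congr (_ && _).
move: hG; rewrite /graphs !powersetE => hG.
apply/andP/idP => [[h1 /eqP h2] | hB].
  apply/subsetP => e eB.
  have eV : e \in vpairs n.
    have : B \subset vpairs n by rewrite -(sdinv G B); apply: sd_sub.
    by move/subsetP; apply.
  rewrite inE eV /=; apply: contraT => ve.
  move/setP: h2 => /(_ e); rewrite !mem_induced in_sd (sub_S_iff hS) ve eB.
  by case: (e \in G).
split.
  by apply: sd_sub => //; apply: subset_trans hB (star_sub v).
apply/eqP/setP => e; rewrite !mem_induced in_sd (sub_S_iff hS).
case ve: (v \in e); first by rewrite !andbF.
have -> : (e \in B) = false.
  by apply/negP => /(subsetP hB); rewrite inE ve andbF.
by rewrite addbF.
Qed.

Lemma count_pairs (S : {set 'I_n}) v (hS : forall u, (u \in S) = (u != v))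
  (g : pred Ty) :
  #|[set P | plinked S P && g P.1 && g P.2]|%:R = Qs (fun G => (g G)%:R) v.
Proof.
transitivity (\sum_(G : Ty) \sum_(G' : Ty)
    ((plinked S (G, G') && g G && g G')%:R : rat)).
  rewrite pair_bigA /= -sum1_card natr_sum big_mkcond /=.
  apply: eq_bigr => -[G G2] _; rewrite inE /=; by case: (_ && _).
rewrite /Qs [RHS]big_mkcond /=; apply: eq_bigr => G _.
case: ifP => hG; last first.
  by apply: big1 => G' _; rewrite /plinked /= hG.
rewrite (reindex_inj (can_inj (sdinv G))) /=.
rewrite [RHS]big_mkcond /=; apply: eq_bigr => B _.
rewrite (plinked_sd hS) // powersetE.
case: ((B \subset star v) && ~~ odd #|B|) => /=; last by [].
by case: (g G); case: (g _); rewrite /= ?mulr1 ?mulr0 ?mul0r.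
Qed.


Implicit Types (t : {perm 'I_n}) (e : {set 'I_n}).

Definition rl (t : {perm 'I_n}) (e : {set 'I_n}) : {set 'I_n} := [set t x | x in e].
Definition rel (t : {perm 'I_n}) (G : Ty) : Ty := [set rl t e | e in G].

Lemma rl_inj t : injective (rl t).
Proof. rewrite /rl; apply: imset_inj; exact: perm_inj. Qed.

Lemma rel_inj t : injective (rel t).
Proof. rewrite /rel; apply: imset_inj; exact: rl_inj. Qed.

Lemma mem_rel t G e : (rl t e \in rel t G) = (e \in G).
Proof. rewrite /rel; apply: mem_imset; exact: rl_inj. Qed.

Lemma mem_rl t e x : (t x \in rl t e) = (x \in e).
Proof. rewrite /rl; apply: mem_imset; exact: perm_inj. Qed.

Lemma card_rl t e : #|rl t e| = #|e|.
Proof. rewrite /rl; apply: card_imset; exact: perm_inj. Qed.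

Lemma card_rel t G : #|rel t G| = #|G|.
Proof. rewrite /rel; apply: card_imset; exact: rl_inj. Qed.

Lemma rlK (t : {perm 'I_n}) (e : {set 'I_n}) : rl t (rl (t^-1)%g e) = e.
Proof.
apply/setP => x; apply/imsetP/idP => [[y /imsetP [z ze ->] ->]|xe].
  by rewrite permKV.
by exists ((t^-1)%g x); [apply: imset_f | rewrite permKV].
Qed.

Lemma rlK' (t : {perm 'I_n}) (e : {set 'I_n}) : rl (t^-1)%g (rl t e) = e.
Proof. by rewrite -{2}(invgK t) rlK. Qed.

Lemma relK (t : {perm 'I_n}) (G : Ty) : rel (t^-1)%g (rel t G) = G.
Proof.
rewrite /rel -imset_comp.
rewrite (eq_imset _ (fun e => rlK' t e)).
exact: imset_id.
Qed.

Lemma sub_rel t (A B G : Ty) :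
  (forall e, (rl t e \in B) = (e \in A)) -> (rel t G \subset B) = (G \subset A).
Proof.
move=> h; apply/subsetP/subsetP => H e.
  by move=> eG; rewrite -h; apply: H; rewrite mem_rel.
by case/imsetP => e' e'G ->; rewrite h; apply: H.
Qed.

Lemma rel_sd t G B : rel t (sd G B) = sd (rel t G) (rel t B).
Proof.
apply/setP => e; rewrite -(rlK t e) mem_rel in_sd in_sd !mem_rel //.
Qed.

Lemma ed_rel t G : even_degenerate G -> even_degenerate (rel t G).
Proof.
move=> /existsP [p /forallP hp]; apply/existsP; exists (p * t)%g.
apply/forallP => i.
have -> : [set j : 'I_n | (i < j)%N && ([set (p * t)%g i; (p * t)%g j] \in rel t G)] =
          [set j : 'I_n | (i < j)%N && ([set p i; p j] \in G)].
  apply/setP => j; rewrite !in_set !permM.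
  have -> : [set t (p i); t (p j)] = rl t [set p i; p j]
    by rewrite /rl imsetU1 imset_set1.
  by rewrite mem_rel.
exact: hp.
Qed.

Lemma ed_relE t G : even_degenerate (rel t G) = even_degenerate G.
Proof.
apply/idP/idP; last exact: ed_rel.
by move=> /(ed_rel (t^-1)%g); rewrite relK.
Qed.

Lemma Qs_sym (f : Ty -> rat) (hf : forall t G, f (rel t G) = f G) v w :
  Qs f w = Qs f v.
Proof.
pose t := tperm v w.
rewrite /Qs (reindex_inj (@rel_inj t)) /=.
apply: eq_big => [G | G hG].
  by rewrite /graphs !powersetE; apply: sub_rel => e; rewrite /vpairs !inE card_rl.
rewrite (reindex_inj (@rel_inj t)) /=.
apply: eq_big => [B | B hB].
  rewrite card_rel !powersetE; congr (_ && _); apply: sub_rel => e.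
  by rewrite !inE card_rl -{1}(tpermL v w) mem_rl.
by rewrite -rel_sd !hf.
Qed.

Lemma fb_rel t G : fb (rel t G) = fb G.
Proof. by rewrite /fb ed_relE. Qed.

End Graphs.

Lemma exists_v n (S : {set 'I_n}) : (2 <= n)%N -> #|S| = n.-1 ->
  exists v, forall u, (u \in S) = (u != v).
Proof.
move=> hn hS.
have h1 : #|~: S| == 1%N.
  have := cardsC S; rewrite hS card_ord => h; apply/eqP; lia.
case/cards1P: h1 => v hv; exists v => u.
by rewrite -[u \in S]negbK -in_setC hv inE.
Qed.

Lemma star_n0 n (v : 'I_n) : (2 <= n)%N -> (star v \subset set0) = false.
Proof.
move=> hn.
have : [set~ v] != set0.
  rewrite -cards_eq0 cardsC1 card_ord; apply/eqP; lia.
case/set0Pn => u; rewrite !inE => uv.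
have vu : v != u by rewrite eq_sym.
apply/negP => /subsetP /(_ [set v; u]).
by rewrite !inE cards2 vu eqxx => /(_ isT).
Qed.

Lemma comb n (S : {set {set 'I_n}}) : S \subset vpairs n -> S != set0 ->
  S != vpairs n -> exists w, (S :&: star w != set0) && ~~ (star w \subset S).
Proof.
move=> SE S0 SE'.
have [e eE eS] : exists2 e, e \in vpairs n & e \notin S.
  apply/subsetPn; apply: contra SE' => h; by rewrite eqEsubset SE h.
case/set0Pn: S0 => e' e'S.
have e'E : e' \in vpairs n := subsetP SE _ e'S.
move: (eE); rewrite inE => /cards2P [a [b [ab eab]]].
subst e.
case hA: (S :&: star a == set0); last first.
  exists a; rewrite hA /=; apply/subsetPn; exists [set a; b] => //.
  by rewrite inE eE set21.
move: (e'E); rewrite inE => /cards2P [c [d [cd e'eq]]].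
subst e'.
have ca : c != a.
  apply/eqP => ca; move/eqP/setP: hA => /(_ [set c; d]).
  by rewrite !inE e'S cards2 cd ca eqxx.
exists c; apply/andP; split.
  by apply/set0Pn; exists [set c; d]; rewrite !inE e'S cards2 cd eqxx.
apply/subsetPn; exists [set c; a].
  by rewrite !inE cards2 ca eqxx.
apply/negP => h; move/eqP/setP: hA => /(_ [set c; a]).
by rewrite !inE h cards2 ca !eqxx orbT.
Qed.

Lemma Qs_ext n (f g : {set {set 'I_n}} -> rat) v :
  (forall G, f G = g G) -> Qs f v = Qs g v.
Proof.
move=> h; rewrite /Qs; apply: eq_bigr => G _; apply: eq_bigr => B _.
by rewrite !h.
Qed.

Theorem mainTheorem16 (n : nat) (hn : (2 <= n)%N) (S : {set 'I_n})
    (hS : #|S| = n.-1) :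
  bstar S <= c_ n - c_ n * (1 - 2 * c_ n) / n%:R.
Proof.
have [v hv] := exists_v hn hS.
set E := vpairs n.
set M : rat := (2 ^ #|E|)%:R.
have M0 : M != 0 by rewrite /M pnatr_eq0 expn_eq0.
set F := fun S0 => fhat E (@fb n) S0 ^+ 2.
set K := fun w : 'I_n => (2 ^ #|star w|)%:R / 2 : rat.
have K0 w : K w != 0 by rewrite /K mulf_neq0 // ?invr_eq0 pnatr_eq0 ?expn_eq0.
set ind := fun (w : 'I_n) (S0 : {set {set 'I_n}}) =>
  ((S0 :&: star w == set0)%:R + (star w \subset S0)%:R : rat).
have Qf w : Qs (@fb n) w = M^-1 * \sum_(S0 in powerset E) F S0 * (K w * ind w S0).
  by rewrite /Qs /graphs Qformula // star_sub.
have Q1 w : Qs (fun _ => 1) w = M * K w.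
  rewrite /Qs /graphs.
  have hw : \sum_(B in powerset (star w) | ~~ odd #|B|) chi set0 B = K w.
    by rewrite sum_chi_even set0I eqxx star_n0 // addr0 mulr1.
  transitivity (\sum_(G in powerset E) K w).
    apply: eq_bigr => G _; rewrite -hw; apply: eq_bigr => B _.
    by rewrite /chi set0I cards0 expr0 mulr1.
  by rewrite sumr_const card_powerset -mulr_natl.
have hM : (#|graphs n|%:R : rat) = M by rewrite /graphs card_powerset.
clearbody M K.
have betaE w : Qs (@fb n) w / Qs (fun _ => 1) w =
    (M * M)^-1 * \sum_(S0 in powerset E) F S0 * ind w S0.
  rewrite Qf Q1.
  under eq_bigr do rewrite mulrCA.
  rewrite -mulr_sumr.
  by field; rewrite ?M0 ?K0.
have bsym w : Qs (@fb n) w / Qs (fun _ => 1) w = Qs (@fb n) v / Qs (fun _ => 1) v.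
  rewrite (Qs_sym (@fb_rel n) v w).
  by rewrite (@Qs_sym n (fun _ => 1) (fun _ _ => erefl) v w).
have bstarE : bstar S = Qs (@fb n) v / Qs (fun _ => 1) v.
  rewrite /bstar (count_pairs hv (fun G => ~~ even_degenerate G)).
  rewrite (@Qs_ext n _ (@fb n)) //.
  have -> : [set P | plinked S P] =
      [set P | plinked S P && predT P.1 && predT P.2].
    by apply/setP => P; rewrite !inE !andbT.
  rewrite (count_pairs hv predT).
  by congr (_ * _^-1); apply: Qs_ext.
have sumfb : \sum_(G in powerset E) @fb n G = M * c_ n.
  rewrite /c_ hM.
  have -> : (#|[set G0 in graphs n | ~~ even_degenerate G0]|%:R : rat) =
      \sum_(G in powerset E) @fb n G.
    rewrite -sum1_card natr_sum big_mkcond [RHS]big_mkcond /=.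
    apply: eq_bigr => G _; rewrite in_set /fb /graphs.
    by case: (G \in _); case: (even_degenerate G).
  by field.
have fbsq G : @fb n G ^+ 2 = @fb n G by rewrite /fb; case: (even_degenerate G).
have sumF : \sum_(S0 in powerset E) F S0 = M * M * c_ n.
  have := parseval E (@fb n).
  under eq_bigr do rewrite fbsq.
  rewrite sumfb.
  have hM' : ((2 ^ #|E|)%:R : rat) = M by rewrite -hM /graphs card_powerset.
  rewrite hM' => h.
  have -> : \sum_(S0 in powerset E) F S0 = M * (M^-1 * \sum_(S0 in powerset E) F S0).
    by field.
  by rewrite -h mulrA.
have fhat0 : fhat E (@fb n) set0 = M * c_ n.
  rewrite /fhat -sumfb; apply: eq_bigr => G _.
  by rewrite /chi set0I cards0 expr0 mulr1.
have fb0 G : 0 <= @fb n G by rewrite /fb; case: (even_degenerate G).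
have FE : F E <= (M * c_ n) ^+ 2.
  have h1 : fhat E (@fb n) E <= M * c_ n.
    rewrite -sumfb /fhat; apply: ler_sum => G _.
    rewrite /chi -signr_odd; case: (odd _) => /=; last by rewrite mulr1.
    by rewrite mulrN1; move: (fb0 G); lra.
  have h2 : - (M * c_ n) <= fhat E (@fb n) E.
    rewrite -sumfb /fhat -sumrN; apply: ler_sum => G _.
    rewrite /chi -signr_odd; case: (odd _) => /=; last by rewrite mulr1; move: (fb0 G); lra.
    by rewrite mulrN1.
  rewrite /F; nra.
have Fge0 S0 : 0 <= F S0 by rewrite /F sqr_ge0.
have tge0 w S0 : 0 <= 1 - ind w S0.
  rewrite /ind.
  case h1: (S0 :&: star w == set0); case h2: (star w \subset S0) => /=.
  - exfalso; have : star w \subset set0 by rewrite -(eqP h1) subsetI h2 subxx.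
    by rewrite star_n0.
  - lra.
  - lra.
  - lra.
have tw (S0 : {set {set 'I_n}}) : S0 \subset E -> S0 != set0 -> S0 != E ->
    1 <= \sum_(w < n) (1 - ind w S0).
  move=> a b c; have [w /andP [h1 h2]] := comb a b c.
  rewrite (bigD1 w) //=.
  have hr : 0 <= \sum_(i < n | i != w) (1 - ind i S0).
    by apply: sumr_ge0 => i _; exact: tge0.
  rewrite /ind (negbTE h1) (negbTE h2) /=.
  lra.
have Mpos : 0 < M.
  rewrite -hM ltr0n; apply/card_gt0P; exists set0.
  by rewrite /graphs powersetE sub0set.
have cE : c_ n = (M * M)^-1 * \sum_(S0 in powerset E) F S0.
  by rewrite sumF; field; rewrite M0.
have e1 : \sum_(w < n) (c_ n - Qs (@fb n) w / Qs (fun _ => 1) w) =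
    (M * M)^-1 * \sum_(S0 in powerset E) F S0 * \sum_(w < n) (1 - ind w S0).
  under eq_bigr do rewrite betaE cE -mulrBr -sumrB.
  rewrite -mulr_sumr exchange_big /=; congr (_ * _).
  apply: eq_bigr => S0 _; rewrite mulr_sumr; apply: eq_bigr => w _.
  by rewrite mulrBr mulr1.
have e2 : \sum_(S0 in powerset E | (S0 != set0) && (S0 != E)) F S0 <=
    \sum_(S0 in powerset E) F S0 * \sum_(w < n) (1 - ind w S0).
  rewrite big_mkcondr /=; apply: ler_sum => S0 hS0.
  case: ifP => hc.
    case/andP: hc => b c.
    have := tw S0 (etrans (esym (powersetE S0 E)) hS0) b c.
    by move: (Fge0 S0); nra.
  by apply: mulr_ge0 => //; apply: sumr_ge0 => w _; exact: tge0.
have E0 : E != set0.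
  apply/negP => /eqP h; move: (star_sub v); rewrite -/E h.
  by rewrite star_n0.
have e3 : \sum_(S0 in powerset E) F S0 =
    F set0 + F E + \sum_(S0 in powerset E | (S0 != set0) && (S0 != E)) F S0.
  rewrite (bigD1 set0) ?powersetE ?sub0set //=.
  rewrite (bigD1 E) /=; last by rewrite powersetE subxx E0.
  rewrite addrA; congr (_ + _); apply: eq_bigl => S0; by rewrite andbA.
have F0 : F set0 = (M * c_ n) ^+ 2 by rewrite /F fhat0.
have key : c_ n * (1 - 2 * c_ n) <=
    \sum_(w < n) (c_ n - Qs (@fb n) w / Qs (fun _ => 1) w).
  rewrite e1.
  have hX : M * M * (c_ n * (1 - 2 * c_ n)) <=
      \sum_(S0 in powerset E) F S0 * \sum_(w < n) (1 - ind w S0).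
    apply: le_trans e2.
    have := e3; rewrite sumF F0 => h.
    have : \sum_(S0 in powerset E | (S0 != set0) && (S0 != E)) F S0 =
      M * M * c_ n - (M * c_ n) ^+ 2 - F E by rewrite h; ring.
    move=> ->; move: FE; nra.
  have yge0 : 0 <= (M * M)^-1 by rewrite invr_ge0 mulr_ge0 // ltW.
  have := ler_wpM2l yge0 hX.
  by rewrite mulKf // mulf_neq0.
have symsum : \sum_(w < n) (c_ n - Qs (@fb n) w / Qs (fun _ => 1) w) =
    n%:R * (c_ n - Qs (@fb n) v / Qs (fun _ => 1) v).
  under eq_bigr do rewrite bsym.
  by rewrite sumr_const card_ord mulr_natl.
rewrite bstarE.
have hn0 : (0 : rat) < n%:R by rewrite ltr0n; lia.
have : c_ n * (1 - 2 * c_ n) / n%:R <= c_ n - Qs (@fb n) v / Qs (fun _ => 1) v.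
  by rewrite ler_pdivrMr // [X in _ <= X]mulrC -symsum.
lra.
Qed.
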